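(* Let $k$ be an algebraically closed field of characteristic $0$, $R=k[x,y]$, and let $L=(x^d,x^{d-1}y^{a_1},\dots,xy^{a_{d-1}},y^{a_d})$ with $0=a_0<a_1<\dots<a_d$ be a lex-segment ideal. If $L^2=(x^d,x^{d-i}y^{a_i},y^{a_d})L$ for some $i\in\{0,\dots,d\}$, then $\operatorname{depth}\operatorname{gr}_L(R)>0$.
   Context: $\operatorname{gr}_L(R)=\bigoplus_{n\ge0}L^n/L^{n+1}$. *)

(* Defs.v *)
From HB Require Import structures.
From mathcomp Require Import all_boot all_order all_algebra.
From mathcomp Require Export mpoly.
Set Implicit Arguments. Unset Strict Implicit. Unset Printing Implicit Defensive.
Import GRing.Theory.
Local Open Scope ring_scope.

Definition in_prod (R : comNzRingType) (I : R -> Prop) (gs : seq R) (p : R) : Prop :=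
  exists hs : seq R, size hs = size gs /\
    (forall j, (j < size gs)%N -> I (nth 0 hs j)) /\
    p = \sum_(j < size gs) nth 0 hs j * nth 0 gs j.

Fixpoint in_pow (R : comNzRingType) (gs : seq R) (n : nat) : R -> Prop :=
  match n with
  | 0 => fun _ => True
  | n'.+1 => in_prod (in_pow gs n') gs
  end.

Definition in_ideal (R : comNzRingType) (gs : seq R) (p : R) : Prop := in_pow gs 1 p.

(* The associated graded ring gr_L(R) = ⊕_{n>=0} L^n/L^{n+1}, L = (gs).
   An element is given by a finite list f of representatives, f_n ∈ L^n
   representing the class of degree n (components beyond size f are 0). *)
Definition gr_elt (R : comNzRingType) (gs : seq R) (f : seq R) : Prop :=
  forall n, in_pow gs n (nth 0 f n).

Definition gr_zero (R : comNzRingType) (gs : seq R) (f : seq R) : Prop :=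
  forall n, in_pow gs n.+1 (nth 0 f n).

Definition gr_mul (R : comNzRingType) (f g : seq R) : seq R :=
  mkseq (fun m => \sum_(j < m.+1) nth 0 f j * nth 0 g (m - j)) (size f + size g).

(* f lies in the homogeneous maximal ideal M = m/L ⊕ gr_+ , where m is the
   ideal generated by ms (for k[x,y]: m = (x,y)). *)
Definition gr_in_max (R : comNzRingType) (ms gs : seq R) (f : seq R) : Prop :=
  in_ideal (ms ++ gs) (nth 0 f 0).

Definition gr_depth_pos (R : comNzRingType) (ms gs : seq R) : Prop :=
  exists f, gr_elt gs f /\ gr_in_max ms gs f /\
    forall g, gr_elt gs g -> gr_zero gs (gr_mul f g) -> gr_zero gs g.

Definition xv (k : comNzRingType) : {mpoly k[2]} := 'X_(ord0 : 'I_2).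
Definition yv (k : comNzRingType) : {mpoly k[2]} := 'X_(ord_max : 'I_2).

Definition lexgens (k : comNzRingType) (d : nat) (a : nat -> nat) : seq {mpoly k[2]} :=
  [seq xv k ^+ (d - j) * yv k ^+ a j | j <- iota 0 d.+1].

(* Main.v *)
Require Import Defs.
From mathcomp Require Import all_boot all_order all_algebra.
From mathcomp Require Import mpoly.
From mathcomp Require Import zify.
Import GRing.Theory.
Set Implicit Arguments. Unset Strict Implicit. Unset Printing Implicit Defensive.

Fixpoint monoL (d : nat) (a : nat -> nat) (n p q : nat) : bool :=
  if n is n'.+1 then
    has (fun j => (d - j <= p) && (a j <= q) && monoL d a n' (p - (d - j)) (q - a j)) (iota 0 d.+1)
  else true.

Lemma monoL_S d a n p q : monoL d a n.+1 p q =
  has (fun j => (d - j <= p) && (a j <= q) && monoL d a n (p - (d - j)) (q - a j)) (iota 0 d.+1).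
Proof. by []. Qed.

Lemma monoL_mono d a n p q p' q' : p <= p' -> q <= q' -> monoL d a n p q -> monoL d a n p' q'.
Proof.
elim: n p q p' q' => [//|n IH] p q p' q' hp hq h.
have /hasP [j hj /andP [/andP [h1 h2] h3]] : has (fun j => (d - j <= p) && (a j <= q) && monoL d a n (p - (d - j)) (q - a j)) (iota 0 d.+1) := h.
rewrite monoL_S; apply/hasP; exists j => //.
rewrite (leq_trans h1 hp) (leq_trans h2 hq) /=.
by apply: (IH _ _ _ _ _ _ h3); lia.
Qed.

Lemma monoLS d a n p q j : j <= d -> monoL d a n p q -> monoL d a n.+1 (p + (d - j)) (q + a j).
Proof.
move=> hj h; rewrite monoL_S; apply/hasP; exists j; first by rewrite mem_iota; lia.
by rewrite leq_addl leq_addl !addnK h.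
Qed.

Lemma monoL_inv d a n p q : monoL d a n.+1 p q ->
  exists j, [/\ j <= d, d - j <= p, a j <= q & monoL d a n (p - (d - j)) (q - a j)].
Proof.
move=> h.
have /hasP [j hj /andP [/andP [h1 h2] h3]] : has (fun j => (d - j <= p) && (a j <= q) && monoL d a n (p - (d - j)) (q - a j)) (iota 0 d.+1) := h.
exists j; split => //.
by move: hj; rewrite mem_iota; lia.
Qed.

Lemma monoL_add d a n k p q p' q' : monoL d a n p q -> monoL d a k p' q' ->
  monoL d a (n + k) (p + p') (q + q').
Proof.
elim: n p q => [|n IH] p q.
  by move=> _; apply: monoL_mono; lia.
move=> /monoL_inv [j [hj h1 h2 h3]] h'.
have := monoLS hj (IH _ _ h3 h').
by apply: monoL_mono; lia.
Qed.

Lemma monoL_rep d a c (hc : c <= d) k : monoL d a k (k * (d - c)) (k * a c).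
Proof.
elim: k => [//|k IH].
have := monoLS hc IH; apply: monoL_mono; rewrite !mulSn; lia.
Qed.

Lemma monoL_J d a i al be ga : i <= d -> a 0 = 0 ->
  monoL d a (al + be + ga) (al * d + be * (d - i)) (be * a i + ga * a d).
Proof.
move=> hi ha0.
have h1 := monoL_rep a (leq0n d) al.
have h2 := monoL_rep a hi be.
have h3 := monoL_rep a (leqnn d) ga.
have := monoL_add (monoL_add h1 h2) h3.
apply: monoL_mono; rewrite ?subn0 ?subnn ?ha0; lia.
Qed.

Lemma monoL_d0 a n p q : a 0 = 0 -> monoL 0 a n p q.
Proof.
move=> ha0; elim: n p q => [//|n IH] p q; rewrite monoL_S; apply/hasP; exists 0 => //.
by rewrite ha0 IH.
Qed.

Lemma monoL_J_struct d a i : i <= d -> a 0 = 0 ->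
  (forall j l, j <= d -> l <= d -> exists c m, [/\ c \in [:: 0; i; d], m <= d,
      (d - c) + (d - m) <= (d - j) + (d - l) & a c + a m <= a j + a l]) ->
  forall n p q, monoL d a n.+1 p q -> exists al be ga m,
    [/\ al + be + ga = n, m <= d, al * d + be * (d - i) + (d - m) <= p &
        be * a i + ga * a d + a m <= q].
Proof.
move=> hi ha0 hpair; elim=> [|n IH] p q.
  move=> /monoL_inv [j [hj h1 h2 _]]; exists 0, 0, 0, j; split => //; lia.
move=> /monoL_inv [j [hj h1 h2 h3]].
have [al [be [ga [m [hs hm hp hq]]]]] := IH _ _ h3.
have [c [m' [hc hm' hp' hq']]] := hpair j m hj hm.
move: hc hp' hq'; rewrite !inE => /orP [/eqP -> hp' hq'|/orP [/eqP -> hp' hq'|/eqP -> hp' hq']].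
- exists al.+1, be, ga, m'; split => //; first lia.
  + rewrite mulSn; move: hp'; rewrite subn0; lia.
  + move: hq'; rewrite ha0; lia.
- exists al, be.+1, ga, m'; split => //; first lia.
  + rewrite mulSn; lia.
  + rewrite mulSn; lia.
- exists al, be, ga.+1, m'; split => //; first lia.
  + move: hp'; rewrite subnn; lia.
  + rewrite mulSn; lia.
Qed.

Lemma lemmaA d a i : i <= d -> a 0 = 0 ->
  (forall j l, j <= d -> l <= d -> exists c m, [/\ c \in [:: 0; i; d], m <= d,
      (d - c) + (d - m) <= (d - j) + (d - l) & a c + a m <= a j + a l]) ->
  forall n pu qu pv qv,
  ~~ monoL d a n.+1 pu qu -> ~~ monoL d a n.+1 pv qv ->
  monoL d a n.+2 (pu + d) qu -> monoL d a n.+2 pv (qv + a d) ->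
  pv <= pu -> qu <= qv -> False.
Proof.
move=> hi ha0 hpair n pu qu pv qv nu nv hu hv hp hq.
have [al [be [ga [m [hs hm hp1 hq1]]]]] := monoL_J_struct hi ha0 hpair hu.
have [al' [be' [ga' [m' [hs' hm' hp2 hq2]]]]] := monoL_J_struct hi ha0 hpair hv.
case: al hs hp1 hq1 => [|al] hs hp1 hq1; last first.
  move/negP: nu; apply.
  have e : al + be + ga = n by lia.
  have := monoLS hm (monoL_J al be ga hi ha0); rewrite e.
  apply: monoL_mono; rewrite ?mulSn; lia.
case: ga' hs' hp2 hq2 => [|ga'] hs' hp2 hq2; last first.
  move/negP: nv; apply.
  have e : al' + be' + ga' = n by lia.
  have := monoLS hm' (monoL_J al' be' ga' hi ha0); rewrite e.
  apply: monoL_mono; rewrite ?mulSn; lia.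
have hu' : pu < be * (d - i).
  rewrite ltnNge; apply/negP => hle; move/negP: nu; apply.
  have := monoL_J 0 be ga hi ha0; rewrite hs; apply: monoL_mono; lia.
have hv' : qv < be' * a i.
  rewrite ltnNge; apply/negP => hle; move/negP: nv; apply.
  have := monoL_J al' be' 0 hi ha0; rewrite hs'; apply: monoL_mono; lia.
have e1 : be' * (d - i) < be * (d - i) by lia.
have e2 : be * a i < be' * a i by lia.
rewrite ltn_mul2r in e1; rewrite ltn_mul2r in e2.
move: e1 e2 => /andP [_ e1] /andP [_ e2]; lia.
Qed.

Local Open Scope ring_scope.

Definition E (d : nat) (a : nat -> nat) (j : nat) : 'X_{1..2} :=
  (U_(ord0) *+ (d - j) + U_(ord_max) *+ a j)%MM.

Lemma E0 d a j : E d a j ord0 = (d - j)%N.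
Proof. by rewrite /E mnmDE !mulmnE !mnm1E /= mul1n mul0n addn0. Qed.
Lemma E1 d a j : E d a j ord_max = a j.
Proof. by rewrite /E mnmDE !mulmnE !mnm1E /= mul1n mul0n. Qed.

Lemma I2 (i : 'I_2) : i = ord0 \/ i = ord_max.
Proof. by case: i => [[|[|//]]] h; [left|right]; apply: val_inj. Qed.

Lemma mnm2P (m1 m2 : 'X_{1..2}) : m1 ord0 = m2 ord0 -> m1 ord_max = m2 ord_max -> m1 = m2.
Proof. by move=> h0 h1; apply/mnmP => i; case: (I2 i) => ->. Qed.

Lemma lexgensE (k : comNzRingType) d a :
  lexgens k d a = [seq 'X_[E d a j] | j <- iota 0 d.+1].
Proof. by apply: eq_map => j; rewrite /xv /yv !mpolyXn -mpolyXD. Qed.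

Lemma in_prod_supp (k : comNzRingType) (I : {mpoly k[2]} -> Prop) (gs : seq {mpoly k[2]})
  (es : seq 'X_{1..2}) (Phi : 'X_{1..2} -> Prop) p :
  (forall j, (j < size gs)%N -> nth 0 gs j = 'X_[nth 0%MM es j]) ->
  (forall h, I h -> forall m, m \in msupp h -> Phi m) ->
  in_prod I gs p -> forall m, m \in msupp p ->
  exists j, (j < size gs)%N /\ exists m', Phi m' /\ m = (m' + nth 0%MM es j)%MM.
Proof.
move=> hgs hI [hs [hsz [hI' ->]]] m /msupp_sum_le /flattenP [s /mapP [j _ ->]].
rewrite hgs //; move=> hm.
have := perm_mem (msuppMX (nth 0 hs j) (nth 0%MM es j)).
move=> /(_ m); rewrite hm => /esym /mapP [m' hm' ->].
exists j; split => //; exists m'; split; first exact: (hI _ (hI' j (ltn_ord j))).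
by rewrite addmC.
Qed.


Definition is_ideal (k : comNzRingType) (I : {mpoly k[2]} -> Prop) := [/\ I 0, forall p q, I p -> I q -> I (p + q) &
   forall r p, I p -> I (r * p)].

Lemma in_prod_ideal (k : comNzRingType) (I : {mpoly k[2]} -> Prop) (gs : seq {mpoly k[2]}) : is_ideal I -> is_ideal (in_prod I gs).
Proof.
move=> [I0 ID IM]; split.
- exists (nseq (size gs) 0); rewrite size_nseq; split => //; split.
    by move=> j hj; rewrite nth_nseq hj.
  by rewrite big1 // => j _; rewrite nth_nseq ltn_ord mul0r.
- move=> p q [hs [hsz [hI ->]]] [hs' [hsz' [hI' ->]]].
  exists [seq nth 0 hs j + nth 0 hs' j | j <- iota 0 (size gs)].
  rewrite size_map size_iota; split => //; split.
    by move=> j hj; rewrite (nth_map 0%N) ?size_iota // nth_iota // add0n; apply: ID; auto.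
  rewrite -big_split /=; apply: eq_bigr => j _.
  by rewrite (nth_map 0%N) ?size_iota // nth_iota // add0n mulrDl.
- move=> r p [hs [hsz [hI ->]]].
  exists [seq r * h | h <- hs]; rewrite size_map; split => //; split.
    by move=> j hj; rewrite (nth_map 0) ?hsz //; apply: IM; auto.
  rewrite mulr_sumr; apply: eq_bigr => j _.
  by rewrite (nth_map 0) ?hsz // mulrA.
Qed.

Lemma in_prod_gen (k : comNzRingType) (I : {mpoly k[2]} -> Prop) (gs : seq {mpoly k[2]}) h j : is_ideal I -> I h -> (j < size gs)%N ->
  in_prod I gs (h * nth 0 gs j).
Proof.
move=> [I0 _ _] hh hj.
exists [seq (if l == j then h else 0) | l <- iota 0 (size gs)].
rewrite size_map size_iota; split => //; split.
  by move=> l hl; rewrite (nth_map 0%N) ?size_iota // nth_iota // add0n; case: eqP.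
rewrite (bigD1 (Ordinal hj)) //= big1 ?addr0.
  by rewrite (nth_map 0%N) ?size_iota // nth_iota // add0n eqxx.
move=> l hl; rewrite (nth_map 0%N) ?size_iota // nth_iota // add0n.
case: eqP => [e|]; last by rewrite mul0r.
by move/eqP: hl; case; apply: val_inj.
Qed.

Lemma in_pow_ideal (k : comNzRingType) (gs : seq {mpoly k[2]}) n : is_ideal (in_pow gs n).
Proof. by elim: n => [|n IH] //=; apply: in_prod_ideal. Qed.

Lemma ideal_sum (k : comNzRingType) (I : {mpoly k[2]} -> Prop) (T : Type) (r : seq T) (F : T -> {mpoly k[2]}) :
  is_ideal I -> (forall x, I (F x)) -> I (\sum_(x <- r) F x).
Proof.
move=> [I0 ID IM] hF; elim: r => [|x r IH]; first by rewrite big_nil.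
by rewrite big_cons; apply: ID.
Qed.

Definition monoM d a n (m : 'X_{1..2}) := monoL d a n (m ord0) (m ord_max).

Lemma nth_lexgens (k : comNzRingType) d a j : (j < d.+1)%N ->
  nth 0 (lexgens k d a) j = 'X_[E d a j].
Proof. by move=> hj; rewrite lexgensE (nth_map 0%N) ?size_iota // nth_iota. Qed.

Lemma size_lexgens (k : comNzRingType) d a : size (lexgens k d a) = d.+1.
Proof. by rewrite size_map size_iota. Qed.

Lemma in_pow_mono (k : comNzRingType) d a n m : monoM d a n m ->
  in_pow (lexgens k d a) n 'X_[m].
Proof.
elim: n m => [//|n IH] m /monoL_inv [j [hj h1 h2 h3]].
have -> : m = ((m - E d a j) + E d a j)%MM.
  by apply: mnm2P; rewrite mnmDE mnmBE ?E0 ?E1; lia.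
rewrite mpolyXD -nth_lexgens //.
apply: in_prod_gen; first exact: in_pow_ideal.
  by apply: IH; rewrite /monoM !mnmBE E0 E1.
by rewrite size_lexgens.
Qed.

Lemma in_pow_of_supp (k : comNzRingType) d a n p :
  (forall m, m \in msupp p -> monoM d a n m) -> in_pow (lexgens k d a) n p.
Proof.
move=> h; rewrite (mpolyE p) big_seq.
have [I0 ID IM] := in_pow_ideal (lexgens k d a) n.
apply: (big_ind (in_pow (lexgens k d a) n)) => // m hm.
by rewrite -mul_mpolyC; apply: IM; apply: in_pow_mono; apply: h.
Qed.

Lemma supp_of_in_pow (k : comNzRingType) d a n p : in_pow (lexgens k d a) n p ->
  forall m, m \in msupp p -> monoM d a n m.
Proof.
elim: n p => [//|n IH] p hp m hm.
have := in_prod_supp (es := [seq E d a j | j <- iota 0 d.+1]) (Phi := monoM d a n) _ IH hp hm.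
case.
  move=> j; rewrite size_lexgens => hj.
  by rewrite nth_lexgens // (nth_map 0%N) ?size_iota // nth_iota.
move=> j [hj [m' [hm' ->]]]; move: hj; rewrite size_lexgens => hj.
rewrite (nth_map 0%N) ?size_iota // nth_iota // add0n.
by rewrite /monoM (mnmDE ord0) (mnmDE ord_max) E0 E1; apply: monoLS.
Qed.

Lemma genE (k : comNzRingType) d a j : xv k ^+ (d - j) * yv k ^+ a j = 'X_[E d a j].
Proof. by rewrite /xv /yv !mpolyXn -mpolyXD. Qed.

Lemma hpair_of (k : comNzRingType) d a i : (i <= d)%N -> a 0%N = 0%N ->
  (forall p : {mpoly k[2]},
     in_pow (lexgens k d a) 2 p <->
     in_prod (in_pow (lexgens k d a) 1)
       [:: xv k ^+ d; xv k ^+ (d - i) * yv k ^+ a i; yv k ^+ a d] p) ->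
  forall j l, (j <= d)%N -> (l <= d)%N -> exists c m, [/\ c \in [:: 0; i; d]%N, (m <= d)%N,
      ((d - c) + (d - m) <= (d - j) + (d - l))%N & (a c + a m <= a j + a l)%N].
Proof.
move=> hi ha0 hL2 j l hj hl.
have hm : in_pow (lexgens k d a) 2 'X_[(E d a j + E d a l)%MM].
  apply: in_pow_mono; rewrite /monoM (mnmDE ord0) (mnmDE ord_max) !E0 !E1.
  have := monoLS hl (monoLS hj (isT : monoL d a 0 0 0)).
  by apply: monoL_mono; lia.
have := in_prod_supp (es := [:: E d a 0; E d a i; E d a d]) (Phi := monoM d a 1) _
  (@supp_of_in_pow k d a 1) (proj1 (hL2 _) hm) (m := (E d a j + E d a l)%MM).
rewrite msuppX mem_seq1 eqxx => /(_ _ isT).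
case.
  move=> j0; case: j0 => [|[|[|//]]] _ /=; rewrite -genE //.
  by rewrite subn0 ha0 expr0 mulr1.
  by rewrite subnn expr0 mul1r.
move=> j0 [hj0 [m' [hmo he]]].
move: hmo; rewrite /monoM => /monoL_inv [m'' [hm'' h1 h2 _]].
have e0 := congr1 (fun m : 'X_{1..2} => m ord0) he; have e1 := congr1 (fun m : 'X_{1..2} => m ord_max) he.
move: e0 e1 => /=; rewrite (mnmDE ord0 (E d a j)) (mnmDE ord0 m') (mnmDE ord_max (E d a j)) (mnmDE ord_max m') !E0 !E1.
clear he; case: j0 hj0 => [|[|[|//]]] _ /=; rewrite ?E0 ?E1 => e0 e1.
- exists 0%N, m''; split; [by rewrite !inE eqxx ?orbT | by [] | lia | lia].
- exists i, m''; split; [by rewrite !inE eqxx ?orbT | by [] | lia | lia].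
- exists d, m''; split; [by rewrite !inE eqxx ?orbT | by [] | lia | lia].
Qed.

Lemma argmax (T : eqType) (s : seq T) (f : T -> nat) x : x \in s ->
  exists2 y, y \in s & forall z, z \in s -> (f z <= f y)%N.
Proof.
elim: s x => // y s IH x _.
case: s IH => [|z s] IH.
  by exists y; rewrite ?inE ?eqxx // => z; rewrite inE => /eqP ->.
have [y' hy' hmax] := IH z (mem_head _ _).
case: (leqP (f y) (f y')) => h.
  exists y'; first by rewrite inE hy' orbT.
  by move=> w; rewrite inE => /orP [/eqP ->|/hmax].
exists y; first exact: mem_head.
move=> w; rewrite inE => /orP [/eqP ->//|/hmax hw]; lia.
Qed.

Lemma mainlemma (k : comNzRingType) d a i : (i <= d)%N -> a 0%N = 0%N ->
  (forall j l, (j <= d)%N -> (l <= d)%N -> exists c m, [/\ c \in [:: 0; i; d]%N, (m <= d)%N,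
      ((d - c) + (d - m) <= (d - j) + (d - l))%N & (a c + a m <= a j + a l)%N]) ->
  (0 < d -> 0 < a d)%N ->
  forall n (g : {mpoly k[2]}),
  in_pow (lexgens k d a) n.+2 ((xv k ^+ d + yv k ^+ a d) * g) ->
  in_pow (lexgens k d a) n.+1 g.
Proof.
move=> hi ha0 hpair had n g hP.
apply: in_pow_of_supp => m hm.
case: (posnP d) => [d0|dpos].
  by move: ha0 hpair hP; rewrite /monoM d0 => ha0 _ _; apply: monoL_d0.
case: (boolP (monoM d a n.+1 m)) => // nm; exfalso.
set S := [seq m <- msupp g | ~~ monoM d a n.+1 m].
have mS : m \in S by rewrite mem_filter nm hm.
have [u uS umax] := argmax (fun m : 'X_{1..2} => m ord0) mS.
have [v vS vmax] := argmax (fun m : 'X_{1..2} => m ord_max) mS.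
move: (uS) (vS); rewrite !mem_filter => /andP [nu hu] /andP [nv hv].
have eP : (xv k ^+ d + yv k ^+ a d) * g = g * 'X_[E d a 0] + g * 'X_[E d a d].
  by rewrite -!genE subn0 ha0 subnn !expr0 mulr1 mul1r mulrDl !(mulrC _ g).
have hsupp := supp_of_in_pow hP; rewrite eP in hsupp.
have hu2 : monoM d a n.+2 (E d a 0 + u)%MM.
  case: (boolP ((E d a 0 + u)%MM \in msupp (g * 'X_[E d a 0] + g * 'X_[E d a d]))).
    by move/hsupp.
  rewrite mcoeff_msupp negbK mcoeffD mcoeffMX => /eqP h.
  have : (g * 'X_[E d a d])@_(E d a 0 + u) != 0.
    apply/eqP => h'; move: h; rewrite h' addr0 => /eqP; apply/negP.
    by rewrite -mcoeff_msupp.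
  rewrite -mcoeff_msupp (perm_mem (msuppMX _ _)) => /mapP [m' hm' he].
  have e0 := congr1 (fun m : 'X_{1..2} => m ord0) he.
  have e1 := congr1 (fun m : 'X_{1..2} => m ord_max) he.
  move: e0 e1 => /=; rewrite (mnmDE ord0 (E d a 0)) (mnmDE ord0 (E d a d))
    (mnmDE ord_max (E d a 0)) (mnmDE ord_max (E d a d)) !E0 !E1 => e0 e1.
  case: (boolP (monoM d a n.+1 m')) => hm'2.
    rewrite /monoM he (mnmDE ord0 (E d a d)) (mnmDE ord_max (E d a d)) !E0 !E1.
    move: (monoLS (leqnn d) hm'2); apply: monoL_mono; clear -e0 e1 ha0; lia.
  have : m' \in S by rewrite mem_filter hm'2 hm'.
  move/umax => /= hle; clear -e0 dpos hle; lia.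
have hv2 : monoM d a n.+2 (E d a d + v)%MM.
  case: (boolP ((E d a d + v)%MM \in msupp (g * 'X_[E d a 0] + g * 'X_[E d a d]))).
    by move/hsupp.
  rewrite mcoeff_msupp negbK mcoeffD [X in _ + X]mcoeffMX => /eqP h.
  have : (g * 'X_[E d a 0])@_(E d a d + v) != 0.
    apply/eqP => h'; move: h; rewrite h' add0r => /eqP; apply/negP.
    by rewrite -mcoeff_msupp.
  rewrite -mcoeff_msupp (perm_mem (msuppMX _ _)) => /mapP [m' hm' he].
  have e0 := congr1 (fun m : 'X_{1..2} => m ord0) he.
  have e1 := congr1 (fun m : 'X_{1..2} => m ord_max) he.
  move: e0 e1 => /=; rewrite (mnmDE ord0 (E d a 0)) (mnmDE ord0 (E d a d))
    (mnmDE ord_max (E d a 0)) (mnmDE ord_max (E d a d)) !E0 !E1 => e0 e1.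
  case: (boolP (monoM d a n.+1 m')) => hm'2.
    rewrite /monoM he (mnmDE ord0 (E d a 0)) (mnmDE ord_max (E d a 0)) !E0 !E1.
    move: (monoLS (leq0n d) hm'2); apply: monoL_mono; clear -e0 e1 ha0; lia.
  have : m' \in S by rewrite mem_filter hm'2 hm'.
  move/vmax => /= hle; have := had dpos; clear -e1 hle ha0; lia.
apply: (lemmaA hi ha0 hpair nu nv).
- move: hu2; rewrite /monoM (mnmDE ord0 (E d a 0)) (mnmDE ord_max (E d a 0)) !E0 !E1.
  by apply: monoL_mono; clear -ha0; lia.
- move: hv2; rewrite /monoM (mnmDE ord0 (E d a d)) (mnmDE ord_max (E d a d)) !E0 !E1.
  by apply: monoL_mono; clear -ha0; lia.
- exact: umax.
- exact: vmax.
Qed.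

Lemma in_pow0 (k : comNzRingType) (gs : seq {mpoly k[2]}) n : in_pow gs n 0.
Proof. by case: (in_pow_ideal gs n). Qed.

Lemma in_powD (k : comNzRingType) (gs : seq {mpoly k[2]}) n p q :
  in_pow gs n p -> in_pow gs n q -> in_pow gs n (p + q).
Proof. by case: (in_pow_ideal gs n) => _ h _; apply: h. Qed.

Lemma a_ge d (a : nat -> nat) : (forall j, (j < d)%N -> (a j < a j.+1)%N) ->
  forall j, (j <= d)%N -> (j <= a j)%N.
Proof.
move=> hinc; elim=> [//|j IH] hj.
have := hinc j hj; have := IH (ltnW hj); lia.
Qed.

Unset Implicit Arguments.

Theorem proposition4p1 (k : closedFieldType) (hk : [pchar k] =i pred0)
  (d : nat) (a : nat -> nat) (ha0 : a 0%N = 0%N)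
  (hinc : forall j, (j < d)%N -> (a j < a j.+1)%N)
  (i : nat) (hi : (i <= d)%N)
  (hL2 : forall p : {mpoly k[2]},
     in_pow (lexgens k d a) 2 p <->
     in_prod (in_pow (lexgens k d a) 1)
       [:: xv k ^+ d; xv k ^+ (d - i) * yv k ^+ a i; yv k ^+ a d] p) :
  gr_depth_pos [:: xv k; yv k] (lexgens k d a).
Proof.
have hpair := hpair_of hi ha0 hL2.
have had : (0 < d -> 0 < a d)%N.
  by move=> dpos; have := a_ge hinc (leqnn d); clear -dpos; lia.
have hmain := mainlemma hi ha0 hpair had.
exists [:: 0; xv k ^+ d + yv k ^+ a d]; split; [|split].
- case=> [|[|n]] //; last by rewrite nth_default //; apply: in_pow0.
  change (in_pow (lexgens k d a) 1 (xv k ^+ d + yv k ^+ a d)).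
  apply: in_powD.
  + have -> : xv k ^+ d = 'X_[E d a 0] by rewrite -genE subn0 ha0 expr0 mulr1.
    apply: in_pow_mono; rewrite /monoM E0 E1 subn0.
    by have := monoLS (leq0n d) (isT : monoL d a 0 0 0); apply: monoL_mono; clear; lia.
  + have -> : yv k ^+ a d = 'X_[E d a d] by rewrite -genE subnn expr0 mul1r.
    apply: in_pow_mono; rewrite /monoM E0 E1 subnn.
    by have := monoLS (leqnn d) (isT : monoL d a 0 0 0); apply: monoL_mono; clear; lia.
- exact: in_pow0.
- move=> g hg hz n; have := hz n.+1; rewrite /gr_mul.
  case: (ltnP n.+1 (size [:: 0; xv k ^+ d + yv k ^+ a d] + size g)) => hn.
    rewrite nth_mkseq // !big_ord_recl big1 /=; last by move=> j _; rewrite nth_nil mul0r.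
    rewrite mul0r add0r addr0 subn1 /=; exact: hmain.
  move=> _; rewrite nth_default; first exact: in_pow0.
  by move: hn => /=; clear; lia.
Qed.
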